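(* Let $\mathcal{C}$, $C_0=\{c_0\}$, $f$ and $r$ be as in the context. Fix $\lambda\in[0,1]$, a discount factor $\gamma$, a random trip-detail variable $X$ with distribution $P$, real-valued measurable functions $u(X)$ and $\tilde u(X)$, a mode-selection policy $\pi_x(X,C)\in[0,1]$, a conditional distribution of the realized fare $p'\ge0$ given $X$, and a coupon-selection policy $\pi_c(\cdot\mid p',C)$ (a probability distribution on $C$ for every $p'\ge0$, $C\in\mathcal C$). Suppose real-valued functions $U$ on $\mathcal C$, $U_x(X,C)$, $U_c(p',C)$ (with all expectations finite) satisfy, for all $C\in\mathcal C$, $X$, $p'\ge0$, $$U(C)=(1-\lambda)\gamma\,U(f(C))+\lambda\,\mathbb{E}_X\big[U_x(X,C)\big],$$ $$U_x(X,C)=\big(1-\pi_x(X,C)\big)\gamma\,U(f(C))+\pi_x(X,C)\Big[u(X)+\mathbb{E}_{p'\mid X}\big[U_c(p',C)\big]\Big]+\tilde u(X),$$ $$U_c(p',C)=\sum_{c\in C}\pi_c(c\mid p',C)\big[r(p',c)+\gamma\,U(f(C,c))\big].$$ Define $V(C)=U(C)-U(C_0)$ and $V_c(p',C)=U_c(p',C)-U_c(p',C_0)$. Then for all $C\in\mathcal C$ and $p'\ge0$, $$V(C)=\gamma V(f(C))+\lambda\,\mathbb{E}_X\Big\{\pi_x(X,C)\Big[u(X)+\mathbb{E}_{p'\mid X}\big[V_c(p',C)\big]-\gamma V(f(C))\Big]-\pi_x(X,C_0)\,u(X)\Big\},$$ $$V_c(p',C)=\sum_{c\in C}\pi_c(c\mid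 p',C)\big[r(p',c)+\gamma V(f(C,c))\big],\qquad V(C_0)=0.$$
   Context: A coupon group is a triple $c=\langle v,T,n\rangle\in\mathbb{R}\times\mathbb{N}\times\mathbb{N}^+$ (face value $v$, remaining time to expiration $T$, number of coupons $n$). The default (zero-valued) group is $c_0=\langle 0,0,1\rangle$. A coupon set is a finite set of coupon groups containing $c_0$ in which no two groups have the same pair $(v,T)$; $\mathcal C$ is the set of all coupon sets and $C_0=\{c_0\}$. For a group, $f_c(\langle v,T,n\rangle)=\langle v,T-1,n\rangle$ if $v>0$, $n>0$ and $T\ge 1$, and $f_c(\langle v,T,n\rangle)=c_0$ otherwise. For $C\in\mathcal C$ and $c=\langle v,T,n\rangle\in C$, $f(C,c)=\{f_c(c'):c'\in C\setminus\{c\}\}\cup\{f_c(\langle v,T,n-1\rangle)\}$ and $f(C):=f(C,c_0)$; in particular $f(C_0)=f(C_0,c_0)=C_0$. The redemption value is $r(p',\langle v,T,n\rangle)=\min(v,p')$ for a realized fare $p'\ge 0$, so $r(p',c_0)=0$. $\mathbb{E}_X$ is expectation over $X\sim P$, $\mathbb{E}_{p'\mid X}$ over the realized fare given $X$. *)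

(* Defs.v *)
From HB Require Import structures.
From mathcomp Require Import all_boot all_order all_algebra.
From mathcomp Require Import finmap.
From mathcomp Require Import all_classical all_reals all_analysis.
Set Implicit Arguments.
Unset Strict Implicit.
Unset Printing Implicit Defensive.
Import Order.TTheory GRing.Theory Num.Theory.
Local Open Scope ring_scope.
Local Open Scope fset_scope.

Section Coupons.
Variable R : realType.

Definition coupon := (R * nat * nat)%type.

Definition cval (c : coupon) : R := c.1.1.
Definition ctime (c : coupon) : nat := c.1.2.
Definition cnum (c : coupon) : nat := c.2.

Definition c0 : coupon := (0, 0%N, 1%N).

Definition coupon_set (C : {fset coupon}) : Prop :=
  [/\ c0 \in C,
      (forall c, c \in C -> (0 < cnum c)%N) &
      (forall c c', c \in C -> c' \in C -> c.1 = c'.1 -> c = c')].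

Definition C0 : {fset coupon} := [fset c0].

Definition fc (c : coupon) : coupon :=
  if [&& 0 < cval c, (0 < cnum c)%N & (1 <= ctime c)%N]
  then (cval c, (ctime c).-1, cnum c) else c0.

Definition fCc (C : {fset coupon}) (c : coupon) : {fset coupon} :=
  [fset fc c' | c' in C `\ c] `|` [fset fc (cval c, ctime c, (cnum c).-1)].

Definition fC (C : {fset coupon}) : {fset coupon} := fCc C c0.

Definition redeem (p : R) (c : coupon) : R := Num.min (cval c) p.

End Coupons.

(* Main.v *)
Set Warnings "-all".
Require Import Defs.
From HB Require Import structures.
From mathcomp Require Import all_boot all_order all_algebra.
From mathcomp Require Import finmap.
From mathcomp Require Import ring lra.
From mathcomp Require Import all_classical all_reals all_analysis.
Import Order.TTheory GRing.Theory Num.Theory.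
Local Open Scope ring_scope.
Lemma fCC0 (R : realType) : fCc (C0 R) (c0 R) = C0 R.
Proof.
apply/fsetP => x; rewrite /fCc /C0 fsetDv !inE.
rewrite /fc /= /cval /= ltxx /=.
apply/idP/idP.
- case/orP => //. move/imfsetP => [y]. by rewrite inE.
- by move=> ->; rewrite orbT.
Qed.
Lemma cs0 (R : realType) : coupon_set (C0 R).
Proof.
split; first by rewrite /C0 inE.
- by move=> c; rewrite /C0 inE => /eqP ->.
- by move=> c c'; rewrite /C0 !inE => /eqP -> /eqP ->.
Qed.
Theorem proposition1 (R : realType) (lam gam : R)
  (d : measure_display) (Tx : measurableType d) (P : probability Tx R)
  (u ut : Tx -> R)
  (pix : Tx -> {fset coupon R} -> R)
  (K : R.-pker Tx ~> R)
  (pic : coupon R -> R -> {fset coupon R} -> R)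
  (U : {fset coupon R} -> R)
  (Ux : Tx -> {fset coupon R} -> R)
  (Uc : R -> {fset coupon R} -> R) :
  0 <= lam <= 1 ->
  measurable_fun setT u -> measurable_fun setT ut ->
  (forall x C, coupon_set C -> 0 <= pix x C <= 1) ->
  (forall x, K x `]-oo, 0%R[%classic = 0%E) ->
  (forall p C, 0 <= p -> coupon_set C ->
     (forall c, c \in C -> 0 <= pic c p C) /\ \sum_(c <- C) pic c p C = 1) ->
  (forall C, coupon_set C ->
     P.-integrable setT (EFin \o (fun x => Ux x C))) ->
  (forall C x, coupon_set C ->
     (K x).-integrable `[0%R, +oo[%classic (EFin \o (fun p => Uc p C))) ->
  (forall C, coupon_set C ->
     U C = (1 - lam) * gam * U (fC C) + lam * Rintegral P setT (fun x => Ux x C)) ->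
  (forall C x, coupon_set C ->
     Ux x C = (1 - pix x C) * gam * U (fC C)
              + pix x C * (u x + Rintegral (K x) `[0%R, +oo[%classic (fun p => Uc p C))
              + ut x) ->
  (forall C p, coupon_set C -> 0 <= p ->
     Uc p C = \sum_(c <- C) pic c p C * (redeem p c + gam * U (fCc C c))) ->
  let V := fun C => U C - U (C0 R) in
  let Vc := fun p C => Uc p C - Uc p (C0 R) in
  forall C p, coupon_set C -> 0 <= p ->
    [/\ V C = gam * V (fC C)
              + lam * Rintegral P setT (fun x =>
                  pix x C * (u x + Rintegral (K x) `[0%R, +oo[%classic (fun q => Vc q C)
                             - gam * V (fC C))
                  - pix x (C0 R) * u x),
        Vc p C = \sum_(c <- C) pic c p C * (redeem p c + gam * V (fCc C c)) &
        V (C0 R) = 0].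
Proof.
move=> hlam mu mut hpix hK hpic iUx iUc hU hUx hUc V Vc C p cC p0.
have c0s := cs0 R.
have UcC0 : forall q, 0 <= q -> Uc q (C0 R) = gam * U (C0 R).
  move=> q q0; rewrite hUc // /C0 big_seq_fset1 fCC0.
  have [_] := hpic q (C0 R) q0 c0s; rewrite /C0 big_seq_fset1 => ->.
  by rewrite /redeem /cval /= min_l // mul1r add0r.
have KI : forall x, fine (K x `[0%R, +oo[%classic) = 1.
  move=> x.
  have := @prob_kernel _ _ _ _ _ K x.
  rewrite -(@itv_setU_setT _ _ true 0) measureU //= ?hK ?add0e => [->//|].
  rewrite -eq_opE; exact: disjoint_rays.
have RUc0 : forall x, Rintegral (K x) `[0%R, +oo[%classic (fun q => Uc q (C0 R)) = gam * U (C0 R).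
  move=> x; rewrite (@eq_Rintegral _ _ _ _ _ (fun _ => gam * U (C0 R))).
    by rewrite Rintegral_cst // KI mulr1.
  by move=> q; rewrite inE /= in_itv /= andbT => /UcC0.
have RVc : forall x, Rintegral (K x) `[0%R, +oo[%classic (fun q => Vc q C)
   = Rintegral (K x) `[0%R, +oo[%classic (fun q => Uc q C) - gam * U (C0 R).
  by move=> x; rewrite /Vc RintegralB // ?RUc0 //; apply: iUc.
split.
- rewrite (@eq_Rintegral _ _ _ _ _ (fun x => Ux x C - (Ux x (C0 R) + gam * V (fC C)))); last first.
    move=> x _; rewrite RVc (hUx C) // (hUx (C0 R)) // RUc0 /V /fC fCC0; ring.
  have iC : P.-integrable setT (EFin \o (fun _ : Tx => gam * V (fC C))).
    exact: finite_measure_integrable_cst.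
  have i2 : P.-integrable setT (EFin \o (fun x => Ux x (C0 R) + gam * V (fC C))).
    by apply: (integrableD _ (iUx _ c0s) iC).
  rewrite RintegralB //; last by apply: iUx.
  rewrite (@RintegralD _ _ _ _ _ (fun x => Ux x (C0 R)) (fun _ => gam * V (fC C))) //; last by apply: iUx.
  rewrite Rintegral_cst //.
  have -> : fine (P [set: Tx]%classic) = 1 by rewrite probability_setT.
  rewrite mulr1.
  have e2 := hU _ c0s; rewrite /fC fCC0 in e2.
  rewrite /V [in LHS](hU C) // [in LHS]e2; ring.
- rewrite /Vc UcC0 // hUc //.
  have [_ hs] := hpic p C p0 cC.
  rewrite /V.
  rewrite [RHS](eq_bigr (fun c => pic c p C * (redeem p c + gam * U (fCc C c)) - pic c p C * (gam * U (C0 R)))); last first.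
    move=> c _; rewrite /V mulrBr addrA mulrBr. done.
  by rewrite sumrB -big_distrl /= hs mul1r.
- by rewrite /V subrr.
Qed.
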